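(* Let $E$ be a finite set, $S\subseteq 2^E$ a powerful set and $e\in E$. Then $e$ is a coloop of $S$ if and only if $\{e\}\in S$.
   Context: A set $S\subseteq 2^E$ is powerful if for every $X\subseteq E$ the number of members of $S$ that are subsets of $X$ is a power of $2$. An element $e\in E$ is a coloop of $S$ if there exists $T\subseteq 2^{E\setminus\{e\}}$ such that $S=\{X,\ X\cup\{e\} : X\in T\}$. *)

(* Defs.v *)
From mathcomp Require Import all_boot.
Set Implicit Arguments. Unset Strict Implicit. Unset Printing Implicit Defensive.

Definition powerful (E : finType) (S : {set {set E}}) : Prop :=
  forall X : {set E}, exists k : nat, #|[set A in S | A \subset X]| = 2 ^ k.

Definition coloop (E : finType) (S : {set {set E}}) (e : E) : Prop :=
  exists T : {set {set E}},
    (forall X, X \in T -> e \notin X) /\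
    S = T :|: [set e |: X | X in T].

(* Main.v *)
Require Import Defs.
From mathcomp Require Import all_boot.
From mathcomp Require Import zify.

Lemma S0_in (E : finType) (S : {set {set E}}) : powerful S -> set0 \in S.
Proof.
move=> /(_ set0) [k Hk].
have : 0 < #|[set A in S | A \subset set0]| by rewrite Hk expn_gt0.
case/card_gt0P => A; rewrite inE => /andP[AS]; rewrite subset0 => /eqP <-.
exact: AS.
Qed.

Lemma key_step (E : finType) (S : {set {set E}}) (e : E) :
  powerful S -> [set e] \in S -> forall X : {set E}, e \notin X ->
  (forall B : {set E}, B \proper X -> (e |: B \in S) = (B \in S)) ->
  (e |: X \in S) = (X \in S).
Proof.
move=> pS eS X eX IH.
have S0 := @S0_in E S pS.
case: (X =P set0) => [-> | Xn0]; first by rewrite setU0 eS S0.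
have [k Hk] := pS (e |: X).
have c1 : #|[set A in S | A \subset e |: X]| =
   #|[set A in S | A \subset X]| + #|[set A in S | A \subset e |: X & e \in A]|.
  rewrite -(cardsID [set A : {set E} | e \in A]) addnC; congr addn.
    apply: eq_card => A; rewrite !inE.
    case: (A \in S) => //=; case eA: (e \in A) => //=.
      by apply/esym/negbTE; apply: contra eX => /subsetP; apply.
    apply/subsetP/subsetP => H x xA.
      by have := H x xA; rewrite in_setU1; case/orP => // /eqP exe; rewrite -exe xA in eA.
    by rewrite in_setU1 H ?orbT.
  by apply: eq_card => A; rewrite !inE andbA.
have c2 : #|[set A in S | A \subset e |: X & e \in A]| =
          #|[set B : {set E} | B \subset X & e |: B \in S]|.
  have -> : [set A in S | A \subset e |: X & e \in A] =
            [set e |: B | B in [set B : {set E} | B \subset X & e |: B \in S]].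
    apply/setP => A; apply/idP/imsetP.
      rewrite !inE => /andP[AS /andP[AX eA]].
      exists (A :\ e); last by rewrite setD1K.
      rewrite !inE setD1K // AS andbT; apply/subsetP => x; rewrite !inE.
      case/andP => xe xA; have := subsetP AX x xA; rewrite in_setU1.
      by rewrite (negbTE xe).
    case=> B; rewrite inE => /andP[BX BS] ->.
    by rewrite !inE BS setUS //= eqxx.
  apply: card_in_imset => B1 B2; rewrite !inE => /andP[B1X _] /andP[B2X _] H.
  have e1 : e \notin B1 by apply: contra eX; apply: (subsetP B1X).
  have e2 : e \notin B2 by apply: contra eX; apply: (subsetP B2X).
  by rewrite -(setU1K e1) -(setU1K e2) H.
have split : forall Q : pred {set E}, #|[set B : {set E} | B \subset X & Q B]| =
    Q X + #|[set B : {set E} | B \proper X & Q B]|.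
  move=> Q; rewrite (cardsD1 X); congr addn; first by rewrite inE subxx.
  by apply: eq_card => B; rewrite !inE properEneq andbA.
have eqa : #|[set B : {set E} | B \proper X & e |: B \in S]| =
           #|[set B : {set E} | B \proper X & B \in S]|.
  by apply: eq_card => B; rewrite !inE; case H: (B \proper X) => //=; rewrite IH.
have fX : #|[set A in S | A \subset X]| = #|[set B : {set E} | B \subset X & B \in S]|.
  by apply: eq_card => B; rewrite !inE andbC.
rewrite c2 fX (split (fun B => e |: B \in S)) (split (fun B => B \in S)) eqa /= in c1.
have apos : 0 < #|[set B : {set E} | B \proper X & B \in S]|.
  apply/card_gt0P; exists set0; rewrite inE S0 andbT proper0.
  by apply/eqP.
rewrite Hk in c1; clear Hk.
move: apos c1; set a := #|_|.
case: (e |: X \in S); case: (X \in S) => //= ap;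
  case: k => [|k]; rewrite ?expnS /=; lia.
Qed.

Theorem theorem3 (E : finType) (S : {set {set E}}) (e : E) :
  powerful S -> (coloop S e <-> [set e] \in S).
Proof.
move=> pS; have S0 := @S0_in E S pS; split.
  case=> T [HT ES]; move: S0; rewrite ES in_setU; case/orP => [S0|/imsetP[X _ H]].
    by rewrite in_setU; apply/orP; right; apply/imsetP; exists set0; rewrite ?setU0.
  by have := setU11 e X; rewrite -H inE.
move=> eS.
have key : forall X : {set E}, e \notin X -> (e |: X \in S) = (X \in S).
  move=> X; move: {2}#|X| (leqnn #|X|) => n; elim: n X => [|n IHn] X HX eX;
    apply: (@key_step E S e pS eS X eX) => B BX.
    by have := proper_card BX; lia.
  apply: IHn; first by have := proper_card BX; lia.
  by apply: contra eX; apply: (subsetP (proper_sub BX)).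
exists [set A in S | e \notin A]; split.
  by move=> X; rewrite inE => /andP[].
apply/setP => A; rewrite !inE; apply/idP/idP.
  move=> AS; case eA: (e \in A); last by rewrite AS.
  apply/orP; right; apply/imsetP; exists (A :\ e); last by rewrite setD1K.
  by rewrite !inE eqxx andbT -key ?setD1K // !inE eqxx.
case/orP => [/andP[] //|/imsetP[X]]; rewrite inE => /andP[XS eX] ->.
by rewrite key.
Qed.
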